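(* Let $X \subseteq \mathbb{Z}^n$ be a closed set, $c \in \mathbb{R}^n$, $Q$ an $n\times n$ symmetric positive semidefinite matrix, and $\Omega > 0$. Define $h:\mathbb{R}^n \times \mathbb{R}_+ \to \mathbb{R}\cup\{+\infty\}$ by $h(x,t) = \frac{x'Qx}{t}$ if $t>0$; $h(x,0) = 0$ if $x'Qx = 0$; and $h(x,0) = +\infty$ otherwise. Let $g(x,t) = c'x + \frac{\Omega}{2}h(x,t) + \frac{\Omega}{2}t$ and $f(t) = \min_{x \in X} g(x,t)$ for $t \ge 0$, and for each $t\ge 0$ let $x(t) \in X$ be a minimizer attaining $f(t)$. If $f$ has a local minimum at $\bar t > 0$, then $$c'x(\bar t) + \Omega\sqrt{x(\bar t)'Qx(\bar t)} = f(\bar t).$$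
   Context: $h$ is the closure of the perspective function of the convex quadratic $q(x)=x'Qx$. The minimum defining $f(t)$ is assumed to be attained, and $x(t)$ denotes a minimizer. *)

(* Defs.v *)
From HB Require Import structures.
From mathcomp Require Import all_boot all_order all_algebra.
From mathcomp Require Import reals constructive_ereal.
Set Implicit Arguments. Unset Strict Implicit. Unset Printing Implicit Defensive.
Import Order.TTheory GRing.Theory Num.Theory.
Local Open Scope ring_scope.
Local Open Scope ereal_scope.

Definition qform (R : realType) (n : nat) (Q : 'M[R]_n) (x : 'cV[R]_n) : R :=
  ((x^T *m Q *m x) ord0 ord0)%R.

Definition lform (R : realType) (n : nat) (c x : 'cV[R]_n) : R :=
  ((c^T *m x) ord0 ord0)%R.

Definition psd (R : realType) (n : nat) (Q : 'M[R]_n) : Prop :=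
  Q^T = Q /\ forall v : 'cV[R]_n, (0 <= qform Q v)%R.

Definition int_vec (R : realType) (n : nat) (x : 'cV[R]_n) : Prop :=
  forall i : 'I_n, exists z : int, x i ord0 = (z%:~R)%R.

(* h(x,t): closure of the perspective of q(x)=x'Qx, for t >= 0
   (value +oo for t < 0, outside the domain R^n x R_+) *)
Definition h (R : realType) (n : nat) (Q : 'M[R]_n) (x : 'cV[R]_n) (t : R) : \bar R :=
  if (0 < t)%R then (qform Q x / t)%:E
  else if t == 0%R then (if qform Q x == 0%R then 0 else +oo)
  else +oo.

Definition g (R : realType) (n : nat) (Q : 'M[R]_n) (c : 'cV[R]_n) (Omega : R)
    (x : 'cV[R]_n) (t : R) : \bar R :=
  (lform c x)%:E + (Omega / 2)%:E * h Q x t + (Omega / 2 * t)%:E.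

(* Main.v *)
Require Import Defs.
From HB Require Import structures.
From mathcomp Require Import all_boot all_order all_algebra.
From mathcomp Require Import reals constructive_ereal.
From mathcomp Require Import ring lra.
Import Order.TTheory GRing.Theory Num.Theory.
Local Open Scope ring_scope.

Lemma gE (R : realType) (n : nat) (Q : 'M[R]_n) (c : 'cV[R]_n) (Omega : R) y t :
  0 < t -> g Q c Omega y t =
  (lform c y + Omega / 2 * (qform Q y / t) + Omega / 2 * t)%:E.
Proof. by move=> t0; rewrite /g /h t0 -EFinM -!EFinD. Qed.

Theorem proposition2 (R : realType) (n : nat) (X : 'cV[R]_n -> Prop)
  (c : 'cV[R]_n) (Q : 'M[R]_n) (Omega : R) (xt : R -> 'cV[R]_n) (tbar : R) :
  (forall x, X x -> int_vec x) ->
  psd Q ->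
  0 < Omega ->
  (* x(t) is a minimizer of g(., t) over X, for every t >= 0 *)
  (forall t, 0 <= t -> X (xt t) /\ forall y, X y -> (g Q c Omega (xt t) t <= g Q c Omega y t)%E) ->
  0 < tbar ->
  (* f(t) = g(x(t), t) has a local minimum at tbar (on its domain t >= 0) *)
  (exists eps : R, 0 < eps /\
     forall t, 0 <= t -> `|t - tbar| < eps ->
       (g Q c Omega (xt tbar) tbar <= g Q c Omega (xt t) t)%E) ->
  ((lform c (xt tbar) + Omega * Num.sqrt (qform Q (xt tbar)))%:E
     = g Q c Omega (xt tbar) tbar)%E.
Proof.
move=> _ [_ psdQ] O0 Hmin t0 [eps [e0 Hloc]].
have [Xb _] := Hmin tbar (ltW t0).
set xb := xt tbar.
set q := qform Q xb.
set a := lform c xb.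
have q0 : 0 <= q := psdQ xb.
have key : forall t, 0 < t -> `|t - tbar| < eps -> 0 <= (t - tbar) * (t * tbar - q).
  move=> t tp ht.
  have H1 := Hloc t (ltW tp) ht.
  have [_ H2] := Hmin t (ltW tp).
  have := le_trans H1 (H2 xb Xb).
  rewrite !gE // lee_fin => H.
  have H3 : q / tbar + tbar <= q / t + t.
    have : Omega / 2 * (q / tbar + tbar) <= Omega / 2 * (q / t + t) by rewrite !mulrDr; move: H; rewrite -!addrA lerD2l. 
    by rewrite ler_pM2l ?divr_gt0.
  have E : (t - tbar) * (t * tbar - q) = (t * tbar) * ((q / t + t) - (q / tbar + tbar)).
    by field; apply/andP; split; rewrite gt_eqF.
  by rewrite E mulr_ge0 ?mulr_ge0 ?subr_ge0 // ltW.
have sq : tbar ^+ 2 = q.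
  case: (ltgtP (tbar ^+ 2) q) => // Hc.
  - set d := Num.min (eps / 2) ((q - tbar ^+ 2) / (2 * tbar)).
    have d0 : 0 < d by rewrite lt_min; apply/andP; split; [rewrite divr_gt0 | rewrite divr_gt0 ?subr_gt0 ?mulr_gt0].
    have d1 : d <= eps / 2 by rewrite ge_min lexx.
    have d2 : d <= (q - tbar ^+ 2) / (2 * tbar) by rewrite ge_min lexx orbT.
    have d3 : d * tbar <= (q - tbar ^+ 2) / 2.
      have -> : (q - tbar ^+ 2) / 2 = (q - tbar ^+ 2) / (2 * tbar) * tbar.
        by by field; rewrite gt_eqF.
      by rewrite ler_pM2r.
    have := key (tbar + d).
    have -> : tbar + d - tbar = d by ring.
    rewrite gtr0_norm //.
    move=> /(_ ltac:(lra) ltac:(lra)).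
    rewrite pmulr_rge0 //; lra.
  - set d := Num.min (eps / 2) ((tbar ^+ 2 - q) / (2 * tbar)).
    have d0 : 0 < d by rewrite lt_min; apply/andP; split; [rewrite divr_gt0 | rewrite divr_gt0 ?subr_gt0 ?mulr_gt0].
    have d1 : d <= eps / 2 by rewrite ge_min lexx.
    have d2 : d <= (tbar ^+ 2 - q) / (2 * tbar) by rewrite ge_min lexx orbT.
    have d3 : d * tbar <= (tbar ^+ 2 - q) / 2.
      have -> : (tbar ^+ 2 - q) / 2 = (tbar ^+ 2 - q) / (2 * tbar) * tbar.
        by by field; rewrite gt_eqF.
      by rewrite ler_pM2r.
    have dt : d < tbar.
      have : d * tbar < tbar * tbar by rewrite -expr2; lra.
      by rewrite ltr_pM2r.
    have := key (tbar - d).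
    have -> : tbar - d - tbar = - d by ring.
    rewrite normrN gtr0_norm //.
    move=> /(_ ltac:(lra) ltac:(lra)).
    rewrite mulNr oppr_ge0 pmulr_rle0 //; nra.
rewrite gE // -sq sqrtr_sqr gtr0_norm //.
congr (_%:E).
rewrite -/a -/q -sq; by field; rewrite gt_eqF.
Qed.
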